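(* Let $n\ge2$, let $\mathcal{S}=\{\boldsymbol{\sigma}(\mathbf{t}):\mathbf{t}\in D\}$ be a rationally parameterisable hypersurface in $\mathbb{R}^n$ and let $O\subseteq D\setminus\sigma_1^{-1}(0)$ be open in $\mathbb{R}^{n-1}$. Suppose there is $\mathbf{t}\in O$ such that \[\det\left(\frac{\partial\overline{\boldsymbol{\sigma}}(\mathbf{t})}{\partial\mathbf{t}}\right)\neq0,\] where $\overline{\boldsymbol{\sigma}}=(\sigma_1,\dots,\sigma_{n-1})^T$, and such that for the point $\mathbf{s}=\boldsymbol{\sigma}(\mathbf{t})\in\mathcal{S}$ there is no neighborhood $U$ of $1$ in $\mathbb{R}$ with $\lambda\mathbf{s}\in\mathcal{S}$ for all $\lambda\in U$. Then $O$ satisfies the inner point condition.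
   Context: An rp-hypersurface is $\mathcal{S}=\{\boldsymbol{\sigma}(\mathbf{t}):\mathbf{t}\in D\}$ with $\boldsymbol{\sigma}=(\sigma_1,\dots,\sigma_n)^T$ having rational functions of $\mathbf{t}=(t_1,\dots,t_{n-1})$ as components and $D\subseteq\mathbb{R}^{n-1}$ a set where they are defined. $\frac{\partial\overline{\boldsymbol{\sigma}}(\mathbf{t})}{\partial\mathbf{t}}$ denotes the $(n-1)\times(n-1)$ Jacobian matrix of $\overline{\boldsymbol{\sigma}}$. $\hat{\boldsymbol{\sigma}}(\mathbf{t})=(\sigma_2(\mathbf{t})/\sigma_1(\mathbf{t}),\dots,\sigma_n(\mathbf{t})/\sigma_1(\mathbf{t}))^T$ for $\mathbf{t}\in D\setminus\sigma_1^{-1}(0)$. The inner point condition for $O$ means: there is $\mathbf{t}'\in O$ such that $\hat{\boldsymbol{\sigma}}(\mathbf{t}')$ is an interior point of $\hat{\boldsymbol{\sigma}}(O)=\{\hat{\boldsymbol{\sigma}}(\mathbf{u}):\mathbf{u}\in O\}$ in $\mathbb{R}^{n-1}$. *)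

(* Defs.v *)
From HB Require Import structures.
From mathcomp Require Import all_boot all_order all_algebra.
From mathcomp Require Import all_classical all_reals all_analysis.
From mathcomp Require mpoly.
Set Implicit Arguments. Unset Strict Implicit. Unset Printing Implicit Defensive.
Import Order.TTheory GRing.Theory Num.Theory.
Import numFieldNormedType.Exports.
Local Open Scope classical_set_scope.
Local Open Scope ring_scope.

(* Throughout, n = m.+1 (so n >= 2 iff 1 <= m); parameters t live in
   R^(n-1) = 'rV[R]_m, points of the hypersurface in R^n = 'rV[R]_m.+1.
   Components are indexed from 0: sigma_1 is component ord0. *)

Definition rat_eval (R : realType) (m : nat)
  (P Q : mpoly.mpoly m R) (t : 'rV[R]_m) : R :=
  mpoly.meval (fun j => t ord0 j) P / mpoly.meval (fun j => t ord0 j) Q.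

Definition sigma (R : realType) (m : nat)
  (P Q : 'I_m.+1 -> mpoly.mpoly m R) (t : 'rV[R]_m) : 'rV[R]_m.+1 :=
  \row_i rat_eval (P i) (Q i) t.

Definition defined_on (R : realType) (m : nat)
  (Q : 'I_m.+1 -> mpoly.mpoly m R) (D : set 'rV[R]_m) : Prop :=
  forall t, D t -> forall i, mpoly.meval (fun j => t ord0 j) (Q i) != 0.

Definition rp_hypersurface (R : realType) (m : nat)
  (P Q : 'I_m.+1 -> mpoly.mpoly m R) (D : set 'rV[R]_m) : set 'rV[R]_m.+1 :=
  sigma P Q @` D.

Definition sigma_bar (R : realType) (m : nat)
  (P Q : 'I_m.+1 -> mpoly.mpoly m R) (t : 'rV[R]_m) : 'rV[R]_m :=
  \row_(i < m) sigma P Q t ord0 (widen_ord (leqnSn m) i).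

(* The Jacobian matrix is the library's derive.jacobian
   (= lin1_mx ('d f t), the transpose of the usual convention; same determinant). *)

Definition sigma_hat (R : realType) (m : nat)
  (P Q : 'I_m.+1 -> mpoly.mpoly m R) (t : 'rV[R]_m) : 'rV[R]_m :=
  \row_(i < m) (sigma P Q t ord0 (lift ord0 i) / sigma P Q t ord0 ord0).

Definition inner_point_condition (R : realType) (m : nat)
  (P Q : 'I_m.+1 -> mpoly.mpoly m R) (O : set 'rV[R]_m) : Prop :=
  exists t', O t' /\ interior (sigma_hat P Q @` O) (sigma_hat P Q t').

(* Main.v *)
Require Import Defs.
From HB Require Import structures.
From mathcomp Require Import all_boot all_order all_algebra.
From mathcomp Require Import all_classical all_reals all_analysis.
From mathcomp Require mpoly.
Import Order.TTheory GRing.Theory Num.Theory.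
Import numFieldNormedType.Exports.
Local Open Scope classical_set_scope.
Local Open Scope ring_scope.
From mathcomp Require Import ring lra.

Set Implicit Arguments. Unset Strict Implicit. Unset Printing Implicit Defensive.

Section Lib.
Variable R : realType.

Lemma ge_min_l (a b : R) : Num.min a b <= a.
Proof. by rewrite ge_min lexx. Qed.
Lemma ge_min_r (a b : R) : Num.min a b <= b.
Proof. by rewrite ge_min lexx orbT. Qed.

Lemma mxnorm_entry m n (A : 'M[R]_(m,n)) i j : `|A i j| <= `|A|.
Proof. change (`|A i j| <= mx_norm A); rewrite mx_normrE.
exact: (le_bigmax _ (fun ij : 'I_m * 'I_n => `|A ij.1 ij.2|) (i,j)).
Qed.

Lemma mxnorm_le m n (A : 'M[R]_(m,n)) c :
  0 <= c -> (forall i j, `|A i j| <= c) -> `|A| <= c.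
Proof.
move=> c0 H; change (mx_norm A <= c); rewrite mx_normrE.
by apply: bigmax_le => // -[i j] _; exact: H.
Qed.

Lemma le_sum_term (I : finType) (F : I -> R) i :
  (forall j, 0 <= F j) -> F i <= \sum_j F j.
Proof.
move=> H; rewrite (bigD1 i) //= lerDl; apply: sumr_ge0 => j _; exact: H.
Qed.

Definition dot m (v g : 'rV[R]_m) : R := \sum_j v 0 j * g 0 j.
Definition gK m (g : 'rV[R]_m) : R := \sum_j `|g 0 j|.

Lemma gK_ge0 m (g : 'rV[R]_m) : 0 <= gK g.
Proof. by apply: sumr_ge0 => j _. Qed.

Lemma dot_bound m (v g : 'rV[R]_m) : `|dot v g| <= gK g * `|v|.
Proof.
rewrite /dot /gK mulr_suml; apply: (le_trans (ler_norm_sum _ _ _)).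
apply: ler_sum => j _; rewrite normrM mulrC; apply: ler_wpM2l => //.
exact: mxnorm_entry.
Qed.

Lemma dotB m (v w g : 'rV[R]_m) : dot (v - w) g = dot v g - dot w g.
Proof.
by rewrite /dot -sumrB; apply: eq_bigr => j _; rewrite !mxE mulrBl.
Qed.

Lemma dotZ m c (v g : 'rV[R]_m) : dot (c *: v) g = c * dot v g.
Proof.
by rewrite /dot mulr_sumr; apply: eq_bigr => j _; rewrite !mxE; ring.
Qed.

Lemma dotDr m (v g g' : 'rV[R]_m) : dot v (g + g') = dot v g + dot v g'.
Proof.
by rewrite /dot -big_split; apply: eq_bigr => j _; rewrite !mxE mulrDr.
Qed.

Lemma dotZr m c (v g : 'rV[R]_m) : dot v (c *: g) = c * dot v g.
Proof.
rewrite /dot mulr_sumr; apply: eq_bigr => j _; rewrite !mxE; ring.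
Qed.

Lemma dotNr m (v g : 'rV[R]_m) : dot v (- g) = - dot v g.
Proof. by rewrite -scaleN1r dotZr mulN1r. Qed.

Lemma dot0r m (v : 'rV[R]_m) : dot v 0 = 0.
Proof. by rewrite /dot big1 // => j _; rewrite mxE mulr0. Qed.

Lemma dot_delta m (v : 'rV[R]_m) j : dot v (delta_mx 0 j) = v 0 j.
Proof.
rewrite /dot (bigD1 j) //= mxE !eqxx /= mulr1 big1 ?addr0 // => k /negbTE kj.
by rewrite mxE kj andbF mulr0.
Qed.

Definition SD m (f : 'rV[R]_m -> R) x g := forall e, 0 < e ->
  exists2 d, 0 < d & forall y z, `|y - x| < d -> `|z - x| < d ->
    `|f y - f z - dot (y - z) g| <= e * `|y - z|.

Lemma SD_ext m (f f' : 'rV[R]_m -> R) x g : f =1 f' -> SD f x g -> SD f' x g.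
Proof.
move=> ff H e e0; have [d d0 Hd] := H e e0; exists d => // y z hy hz.
by rewrite -!ff; exact: Hd.
Qed.

Lemma SD_cst m c (x : 'rV[R]_m) : SD (fun _ => c) x 0.
Proof.
move=> e e0; exists 1 => // y z _ _.
by rewrite dot0r !subrr normr0 mulr_ge0 // ltW.
Qed.

Lemma SD_coord m j (x : 'rV[R]_m) : SD (fun y => y 0 j) x (delta_mx 0 j).
Proof.
move=> e e0; exists 1 => // y z _ _.
by rewrite dot_delta !mxE subrr normr0 mulr_ge0 // ltW.
Qed.

Lemma SD_lip m (f : 'rV[R]_m -> R) x g : SD f x g ->
  exists2 d, 0 < d & forall y z, `|y - x| < d -> `|z - x| < d ->
    `|f y - f z| <= (gK g + 1) * `|y - z|.
Proof.
move=> H; have [d d0 Hd] := H 1 ltr01; exists d => // y z hy hz.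
have := Hd y z hy hz; have := dot_bound (y - z) g => h1 h2.
have -> : f y - f z = (f y - f z - dot (y - z) g) + dot (y - z) g by ring.
apply: (le_trans (ler_normD _ _)); rewrite mulrDl mul1r [X in _ <= X]addrC.
rewrite mul1r in h2; exact: lerD h2 h1.
Qed.

Lemma SD_cont m (f : 'rV[R]_m -> R) x g : SD f x g -> forall e, 0 < e ->
  exists2 d, 0 < d & forall y, `|y - x| < d -> `|f y - f x| <= e.
Proof.
move=> H e e0; have [d d0 Hd] := SD_lip H.
have K0 : 0 < gK g + 1 by rewrite ltr_wpDl // gK_ge0.
exists (Num.min d (e / (gK g + 1))).
  by rewrite lt_min d0 divr_gt0.
move=> y; rewrite lt_min => /andP [h1 h2].
apply: (le_trans (Hd y x h1 _)); first by rewrite subrr normr0.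
rewrite -ler_pdivlMl // mulrC; apply: ltW; exact: h2.
Qed.

Lemma SD_add m (f h : 'rV[R]_m -> R) x g g' : SD f x g -> SD h x g' ->
  SD (fun y => f y + h y) x (g + g').
Proof.
move=> Hf Hh e e0.
have e20 : 0 < e / 2 by rewrite divr_gt0.
have [d1 d10 H1] := Hf _ e20; have [d2 d20 H2] := Hh _ e20.
exists (Num.min d1 d2); first by rewrite lt_min d10 d20.
move=> y z; rewrite !lt_min => /andP [y1 y2] /andP [z1 z2].
have -> : f y + h y - (f z + h z) - dot (y - z) (g + g') =
  (f y - f z - dot (y - z) g) + (h y - h z - dot (y - z) g').
  by rewrite dotDr; ring.
apply: (le_trans (ler_normD _ _)).
have -> : e * `|y - z| = e / 2 * `|y - z| + e / 2 * `|y - z|.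
  by rewrite -mulrDl -splitr.
exact: lerD (H1 _ _ y1 z1) (H2 _ _ y2 z2).
Qed.


Lemma SD_mul m (f h : 'rV[R]_m -> R) x g g' : SD f x g -> SD h x g' ->
  SD (fun y => f y * h y) x (h x *: g + f x *: g').
Proof.
move=> Hf Hh e e0.
set A := `|h x| + 1; set B := `|f x| + 1.
set S := A + B + gK g + gK g' + 1.
have K1 := gK_ge0 g; have K2 := gK_ge0 g'.
have A0 : 0 <= A by rewrite addr_ge0.
have B0 : 0 <= B by rewrite addr_ge0.
have S0 : 0 < S by rewrite ltr_wpDl // !addr_ge0.
set e' := e / S.
have e'0 : 0 < e' by rewrite divr_gt0.
have e'S : e' * S = e by rewrite /e' divfK // gt_eqF.
have c0 : 0 < Num.min 1 e' by rewrite lt_min ltr01 e'0.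
have [d1 d10 H1] := Hf _ e'0; have [d2 d20 H2] := Hh _ e'0.
have [d3 d30 H3] := SD_cont Hh c0; have [d4 d40 H4] := SD_cont Hf c0.
exists (Num.min (Num.min d1 d2) (Num.min d3 d4)).
  by rewrite !lt_min d10 d20 d30 d40.
move=> y z; rewrite !lt_min => /andP [/andP [y1 y2] /andP [y3 y4]].
move=> /andP [/andP [z1 z2] /andP [z3 z4]].
set v := y - z.
set a := f y - f z - dot v g; set b := h y - h z - dot v g'.
have -> : f y * h y - f z * h z - dot v (h x *: g + f x *: g') =
  a * h y + dot v g * (h y - h x) + f z * b + dot v g' * (f z - f x).
  by rewrite dotDr !dotZr /a /b; ring.
have ha : `|a| <= e' * `|v| by exact: H1.
have hb : `|b| <= e' * `|v| by exact: H2.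
have hhy : `|h y - h x| <= Num.min 1 e' by exact: H3.
have hfz : `|f z - f x| <= Num.min 1 e' by exact: H4.
have hhy1 : `|h y| <= A.
  have := le_trans hhy (ge_min_l _ _) => hh.
  have -> : h y = (h y - h x) + h x by ring.
  by apply: (le_trans (ler_normD _ _)); rewrite /A addrC lerD.
have hfz1 : `|f z| <= B.
  have := le_trans hfz (ge_min_l _ _) => hh.
  have -> : f z = (f z - f x) + f x by ring.
  by apply: (le_trans (ler_normD _ _)); rewrite /B addrC lerD.
have hhy2 := le_trans hhy (ge_min_r _ _).
have hfz2 := le_trans hfz (ge_min_r _ _).
have t1 : `|a * h y| <= e' * `|v| * A.
  by rewrite normrM; apply: ler_pM.
have t2 : `|dot v g * (h y - h x)| <= gK g * `|v| * e'.
  by rewrite normrM; apply: ler_pM => //; exact: dot_bound.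
have t3 : `|f z * b| <= B * (e' * `|v|).
  by rewrite normrM; apply: ler_pM.
have t4 : `|dot v g' * (f z - f x)| <= gK g' * `|v| * e'.
  by rewrite normrM; apply: ler_pM => //; exact: dot_bound.
have nv : 0 <= `|v| by [].
apply: (le_trans (ler_normD _ _)); apply: (le_trans (lerD (ler_normD _ _) (lexx _))).
apply: (le_trans (lerD (lerD (ler_normD _ _) (lexx _)) (lexx _))).
have : e' * `|v| * A + gK g * `|v| * e' + B * (e' * `|v|) + gK g' * `|v| * e' <= e * `|v|.
  rewrite -e'S /S; nra.
move=> hfin; apply: le_trans hfin; lra.
Qed.


Definition SD1 (phi : R -> R) c a := forall e, 0 < e ->
  exists2 d, 0 < d & forall p q, `|p - c| < d -> `|q - c| < d ->
    `|phi p - phi q - a * (p - q)| <= e * `|p - q|.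

Lemma SD_comp1 m (f : 'rV[R]_m -> R) x g phi a : SD f x g -> SD1 phi (f x) a ->
  SD (fun y => phi (f y)) x (a *: g).
Proof.
move=> Hf Hp e e0.
set L := gK g + 1.
have L0 : 0 < L by rewrite ltr_wpDl // gK_ge0.
have A0 : 0 < `|a| + 1 by rewrite ltr_wpDl.
set e1 := e / (2 * L); set e2 := e / (2 * (`|a| + 1)).
have e10 : 0 < e1 by rewrite divr_gt0 // mulr_gt0.
have e20 : 0 < e2 by rewrite divr_gt0 // mulr_gt0.
have e1L : e1 * (2 * L) = e by rewrite divfK // gt_eqF // mulr_gt0.
have e2A : e2 * (2 * (`|a| + 1)) = e by rewrite divfK // gt_eqF // mulr_gt0.
have [dp dp0 Hdp] := Hp _ e10.
have dp20 : 0 < dp / 2 by rewrite divr_gt0.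
have [dc dc0 Hdc] := SD_cont Hf dp20.
have [dl dl0 Hdl] := SD_lip Hf.
have [d2 d20 H2] := Hf _ e20.
exists (Num.min dc (Num.min dl d2)); first by rewrite !lt_min dc0 dl0 d20.
move=> y z; rewrite !lt_min => /andP [y1 /andP [y2 y3]] /andP [z1 /andP [z2 z3]].
have hfy : `|f y - f x| < dp.
  by apply: (le_lt_trans (Hdc _ y1)); rewrite ltr_pdivrMr // ltr_pMr // ltr1n.
have hfz : `|f z - f x| < dp.
  by apply: (le_lt_trans (Hdc _ z1)); rewrite ltr_pdivrMr // ltr_pMr // ltr1n.
have h1 := Hdp _ _ hfy hfz.
have h2 := Hdl _ _ y2 z2.
have h3 := H2 _ _ y3 z3.
have -> : phi (f y) - phi (f z) - dot (y - z) (a *: g) =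
  (phi (f y) - phi (f z) - a * (f y - f z)) + a * (f y - f z - dot (y - z) g).
  by rewrite dotZr; ring.
apply: (le_trans (ler_normD _ _)); rewrite normrM.
have t1 : e1 * `|f y - f z| <= e1 * (L * `|y - z|) by rewrite ler_wpM2l // ltW.
have t2 : `|a| * `|f y - f z - dot (y - z) g| <= `|a| * (e2 * `|y - z|).
  by rewrite ler_wpM2l.
have nv : 0 <= `|y - z| by [].
have na : 0 <= `|a| by [].
have : e1 * (L * `|y - z|) + `|a| * (e2 * `|y - z|) <= e * `|y - z|.
  have u1 : e1 * (L * `|y - z|) = e / 2 * `|y - z| by rewrite -e1L; field.
  have u2 : `|a| * (e2 * `|y - z|) <= e / 2 * `|y - z|.
    rewrite -e2A; have -> : e2 * (2 * (`|a| + 1)) / 2 = e2 * (`|a| + 1) by field.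
    nra.
  rewrite u1; have -> : e * `|y - z| = e / 2 * `|y - z| + e / 2 * `|y - z|.
    by rewrite -mulrDl -splitr.
  by rewrite lerD2l.
move=> hf; apply: le_trans hf; lra.
Qed.

Lemma SD1_inv c : c != 0 -> SD1 (fun p => p^-1) c (- (c ^+ 2)^-1).
Proof.
move=> c0 e e0.
set k := `|c|.
have k0 : 0 < k by rewrite normr_gt0.
exists (Num.min (k / 2) (e * k ^+ 3 / 10)).
  by rewrite lt_min !divr_gt0 // ?mulr_gt0 // exprn_gt0.
move=> p q; rewrite !lt_min => /andP [p1 p2] /andP [q1 q2].
have hp : k / 2 <= `|p|.
  have : k <= `|p| + `|p - c|.
    by have := ler_normB p (p - c); rewrite (_ : p - (p - c) = c) //; ring.
  lra.
have hq : k / 2 <= `|q|.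
  have : k <= `|q| + `|q - c|.
    by have := ler_normB q (q - c); rewrite (_ : q - (q - c) = c) //; ring.
  lra.
have hq' : `|q| <= k + k / 2.
  have : `|q| <= `|q - c| + k.
    by have := ler_normD (q - c) c; rewrite (_ : q - c + c = q) //; ring.
  lra.
have p0 : p != 0 by rewrite -normr_gt0; lra.
have q0 : q != 0 by rewrite -normr_gt0; lra.
have -> : p^-1 - q^-1 - - (c ^+ 2)^-1 * (p - q) =
    (p - q) * ((p * q - c ^+ 2) / (c ^+ 2 * (p * q))).
  by field; rewrite c0 p0 q0.
rewrite normrM mulrC ler_wpM2r // normrM normfV normrM normrX -/k.
have pq0 : 0 < `|p| * `|q| by rewrite mulr_gt0 // normr_gt0.
rewrite ler_pdivrMr; last by rewrite mulr_gt0 ?exprn_gt0 // normrM.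
have hpq : `|p * q - c ^+ 2| <= `|p - c| * `|q| + k * `|q - c|.
  have -> : p * q - c ^+ 2 = (p - c) * q + c * (q - c) by ring.
  by apply: (le_trans (ler_normD _ _)); rewrite !normrM.
have hpc := ltW p2; have hqc := ltW q2.
have n1 : 0 <= `|p - c| by []. have n2 : 0 <= `|q - c| by [].
have : `|p - c| * `|q| <= (e * k ^+ 3 / 10) * (k + k / 2).
  by apply: ler_pM.
have : k * `|q - c| <= k * (e * k ^+ 3 / 10) by rewrite ler_wpM2l // ltW.
have : k ^+ 2 / 4 <= `|p| * `|q|.
  have -> : k ^+ 2 / 4 = (k / 2) * (k / 2) by rewrite expr2; field.
  by apply: ler_pM => //; rewrite divr_ge0 // ltW.
move=> hA hB hC.
have : e * k ^+ 3 / 10 * (k + k / 2) + k * (e * k ^+ 3 / 10) <= e * (k ^+ 2 * (`|p| * `|q|)).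
  have -> : e * k ^+ 3 / 10 * (k + k / 2) + k * (e * k ^+ 3 / 10) = e * k ^+ 2 * (k ^+ 2 / 4).
    by rewrite !exprS expr0; field.
  have ek : 0 < e * k ^+ 2 by rewrite mulr_gt0 // exprn_gt0.
  nra.
rewrite [`|p * q|]normrM; lra.
Qed.

End Lib.

Section Lib2.
Variable R : realType.

Definition SDex m (f : 'rV[R]_m -> R) x := exists g, SD f x g.

Lemma SDex_ext m (f f' : 'rV[R]_m -> R) x : f =1 f' -> SDex f x -> SDex f' x.
Proof. by move=> ff [g H]; exists g; exact: SD_ext H. Qed.

Lemma SDex_cst m c (x : 'rV[R]_m) : SDex (fun _ => c) x.
Proof. by exists 0; exact: SD_cst. Qed.

Lemma SDex_add m (f h : 'rV[R]_m -> R) x : SDex f x -> SDex h x ->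
  SDex (fun y => f y + h y) x.
Proof. by move=> [g H1] [g' H2]; exists (g + g'); exact: SD_add. Qed.

Lemma SDex_mul m (f h : 'rV[R]_m -> R) x : SDex f x -> SDex h x ->
  SDex (fun y => f y * h y) x.
Proof. by move=> [g H1] [g' H2]; exists (h x *: g + f x *: g'); exact: SD_mul. Qed.

Lemma SD_inv m (f : 'rV[R]_m -> R) x g : SD f x g -> f x != 0 ->
  SD (fun y => (f y)^-1) x (- (f x ^+ 2)^-1 *: g).
Proof. move=> H fx0; exact: (@SD_comp1 R m f x g (fun p => p^-1) _ H (SD1_inv fx0)). Qed.

Lemma SD_div m (f h : 'rV[R]_m -> R) x g g' : SD f x g -> SD h x g' -> h x != 0 ->
  SD (fun y => f y / h y) x ((h x)^-1 *: g - (f x / h x ^+ 2) *: g').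
Proof.
move=> Hf Hh hx0.
have := SD_mul Hf (SD_inv Hh hx0).
have -> : ((h x)^-1 *: g + f x *: (- (h x ^+ 2)^-1 *: g')) =
  ((h x)^-1 *: g - (f x / h x ^+ 2) *: g').
  by rewrite scalerA mulrN scaleNr mulrC.
by [].
Qed.

Lemma SDex_pow m (f : 'rV[R]_m -> R) x n : SDex f x -> SDex (fun y => f y ^+ n) x.
Proof.
move=> H; elim: n => [|n IH].
  by apply: (SDex_ext (f := fun _ => 1)) => [y|]; [rewrite expr0 | exact: SDex_cst].
apply: (SDex_ext (f := fun y => f y * f y ^+ n)) => [y|]; first by rewrite exprS.
exact: SDex_mul.
Qed.

Lemma SDex_prod m (I : Type) (r : seq I) (F : I -> 'rV[R]_m -> R) x :
  (forall i, SDex (F i) x) -> SDex (fun y => \prod_(i <- r) F i y) x.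
Proof.
move=> H; elim: r => [|i r IH].
  by apply: (SDex_ext (f := fun _ => 1)) => [y|]; [rewrite big_nil | exact: SDex_cst].
apply: (SDex_ext (f := fun y => F i y * \prod_(j <- r) F j y)) => [y|].
  by rewrite big_cons.
exact: SDex_mul.
Qed.

Lemma SDex_meval m (p : mpoly.mpoly m R) x :
  SDex (fun y : 'rV[R]_m => mpoly.meval (fun j => y 0 j) p) x.
Proof.
elim/mpoly.mpolyind: p => [|c mm p _ _ IH].
  by apply: (SDex_ext (f := fun _ => 0)) => [y|]; [rewrite mpoly.meval0 | exact: SDex_cst].
apply: (SDex_ext (f := fun y : 'rV[R]_m => c * \prod_(i < m) (y 0 i) ^+ mpoly.fun_of_multinom mm i
   + mpoly.meval (fun j => y 0 j) p)) => [y|].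
  by rewrite mpoly.mevalD mpoly.mevalZ mpoly.mevalX.
apply: SDex_add => //; apply: SDex_mul; first exact: SDex_cst.
apply: SDex_prod => i; apply: SDex_pow; exists (delta_mx 0 i); exact: SD_coord.
Qed.

End Lib2.

HB.instance Definition _ (R : realType) (m n : nat) :=
  Uniform_isComplete.Build 'M[R]_(m, n) (@mx_complete R m n).

Section Lib3.
Variable R : realType.

Definition Mof m k (G : 'I_k -> 'rV[R]_m) : 'M[R]_(m,k) := \matrix_(j, i) G i 0 j.

Lemma mulMof m k (v : 'rV[R]_m) (G : 'I_k -> 'rV[R]_m) i : (v *m Mof G) 0 i = dot v (G i).
Proof. by rewrite !mxE; apply: eq_bigr => j _; rewrite mxE. Qed.

Definition SDV m k (F : 'rV[R]_m -> 'rV[R]_k) x (M : 'M[R]_(m,k)) := forall e, 0 < e ->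
  exists2 d, 0 < d & forall y z, `|y - x| < d -> `|z - x| < d ->
    `|F y - F z - (y - z) *m M| <= e * `|y - z|.

Lemma entryBB k (A B C : 'rV[R]_k) i : (A - B - C) 0 i = A 0 i - B 0 i - C 0 i.
Proof. by rewrite !mxE. Qed.

Lemma SDV_Mof m k (F : 'rV[R]_m -> 'rV[R]_k) x G :
  (forall i, SD (fun y => F y 0 i) x (G i)) -> SDV F x (Mof G).
Proof.
move=> H e e0.
have : forall i, exists d, 0 < d /\ forall y z, `|y - x| < d -> `|z - x| < d ->
    `|F y 0 i - F z 0 i - dot (y - z) (G i)| <= e * `|y - z|.
  by move=> i; have [d d0 Hd] := H i e e0; exists d.
move=> /choice [D HD].
exists (\big[Num.min/1]_i D i).
  by apply: lt_bigmin => // i _; exact: (HD i).1.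
move=> y z hy hz; apply: mxnorm_le; first by rewrite mulr_ge0 // ltW.
move=> a i; rewrite (ord1 a) entryBB mulMof; apply: (HD i).2.
  by apply: (lt_le_trans hy); exact: bigmin_le.
by apply: (lt_le_trans hz); exact: bigmin_le.
Qed.

Definition mK m k (M : 'M[R]_(m,k)) := \sum_j \sum_i `|M j i|.

Lemma mK_ge0 m k (M : 'M[R]_(m,k)) : 0 <= mK M.
Proof. by apply: sumr_ge0 => j _; apply: sumr_ge0. Qed.

Lemma mulmx_bound m k (v : 'rV[R]_m) (M : 'M[R]_(m,k)) : `|v *m M| <= mK M * `|v|.
Proof.
apply: mxnorm_le; first by rewrite mulr_ge0 // mK_ge0.
move=> a i; rewrite (ord1 a) mxE.
apply: (le_trans (ler_norm_sum _ _ _)).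
apply: (@le_trans _ _ (\sum_j `|v| * \sum_i' `|M j i'|)); last first.
  by rewrite -mulr_sumr mulrC.
apply: ler_sum => j _; rewrite normrM; apply: ler_pM => //.
  exact: mxnorm_entry.
exact: (@le_sum_term R _ (fun i' => `|M j i'|) i (fun _ => normr_ge0 _)).
Qed.

Lemma inv_lb m (M : 'M[R]_m) : \det M != 0 ->
  exists2 k, 0 < k & forall v : 'rV[R]_m, k * `|v| <= `|v *m M|.
Proof.
move=> dM; have uM : M \in unitmx by rewrite unitmxE unitfE.
set C := mK (invmx M) + 1.
have C0 : 0 < C by rewrite ltr_wpDl // mK_ge0.
exists C^-1; first by rewrite invr_gt0.
move=> v; rewrite mulrC ler_pdivrMr //.
have E : v = (v *m M) *m invmx M by rewrite mulmxK.
rewrite mulrC {1}E; apply: (le_trans (mulmx_bound _ _)); rewrite ler_wpM2r //.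
by rewrite /C lerDl.
Qed.

Lemma LS m (F : 'rV[R]_m -> 'rV[R]_m) p M : SDV F p M -> \det M != 0 ->
  forall r, 0 < r -> exists2 rho, 0 < rho & forall y, `|y - F p| < rho ->
    exists2 x, `|x - p| <= r & F x = y.
Proof.
move=> HF dM r r0.
have uM : M \in unitmx by rewrite unitmxE unitfE.
set B := invmx M; set C := mK B + 1.
have C0 : 0 < C by rewrite ltr_wpDl // mK_ge0.
have hB : forall z : 'rV[R]_m, `|z *m B| <= C * `|z|.
  move=> z; apply: (le_trans (mulmx_bound _ _)); rewrite ler_wpM2r //.
  by rewrite /C lerDl.
set e := (2 * C)^-1.
have e0 : 0 < e by rewrite invr_gt0 mulr_gt0.
have [d d0 Hd] := HF e e0.
set r' := Num.min r (d / 2).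
have r'0 : 0 < r' by rewrite lt_min r0 divr_gt0.
exists (r' / (2 * C)); first by rewrite divr_gt0 // mulr_gt0.
move=> y hy.
pose T := fun x => x - (F x - y) *m B.
pose U := closed_ball_ (fun x : 'rV[R]_m => `|x|) p r'.
have Ud : forall x, U x -> `|x - p| < d.
  move=> x; rewrite /U /closed_ball_ /= distrC => h.
  apply: (le_lt_trans h); apply: (le_lt_trans (ge_min_r _ _)).
  by rewrite ltr_pdivrMr // ltr_pMr // ltr1n.
have Tlip : forall x z, U x -> U z -> `|T x - T z| <= 2^-1 * `|x - z|.
  move=> x z Ux Uz.
  have -> : T x - T z = ((x - z) *m M - (F x - F z)) *m B.
    rewrite mulmxBl mulmxK // /T !mulmxBl.
    move: (F x *m B) (F z *m B) (y *m B) => a b c.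
    by apply/rowP => i; rewrite !mxE; ring.
  apply: (le_trans (hB _)).
  rewrite -normrN opprB.
  have := Hd x z (Ud x Ux) (Ud z Uz) => h.
  apply: (le_trans (ler_wpM2l (ltW C0) h)).
  rewrite mulrA /e invfM mulrCA mulfV ?gt_eqF // mulr1 //.
have TU : {homo T : x / U x >-> U x}.
  move=> x Ux; rewrite /U /closed_ball_ /= distrC.
  have -> : T x - p = (T x - T p) + (T p - p) by rewrite subrKA.
  apply: (le_trans (ler_normD _ _)).
  have h1 := Tlip x p Ux.
  have Up : U p by rewrite /U /closed_ball_ /= subrr normr0 ltW.
  have := h1 Up => {}h1.
  have h2 : `|T p - p| <= r' / 2.
    rewrite /T addrAC subrr add0r normrN.
    apply: (le_trans (hB _)); rewrite distrC in hy.
    have : C * `|F p - y| <= C * (r' / (2 * C)) by rewrite ler_wpM2l // ltW.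
    have -> : C * (r' / (2 * C)) = r' / 2 by field; rewrite gt_eqF.
    by [].
  have : `|x - p| <= r' by move: Ux; rewrite /U /closed_ball_ /= distrC.
  move=> hx; lra.
have [f Tf] := Pfun TU.
have ctr : is_contraction f.
  exists (2^-1)%:nng; split => //=; first by rewrite invf_lt1 // ltr1n.
  move=> [x z] [/= Ux Uz]; rewrite -Tf /=; exact: Tlip.
have Up : U p by rewrite /U /closed_ball_ /= subrr normr0 ltW.
have [x Ux xfx] := banach_fixed_point ctr (@closed_closed_ball_ R _ p r') (ex_intro _ p Up).
exists x.
  move: Ux; rewrite /U /closed_ball_ /= distrC => h; exact: (le_trans h (ge_min_l _ _)).
have h0 : (F x - y) *m B = 0.
  rewrite -Tf /T in xfx.
  apply/rowP => i; have := congr1 (fun w : 'rV[R]_m => w 0 i) xfx.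
  rewrite [in RHS]mxE [X in _ = _ + X]mxE [in RHS]mxE => h.
  rewrite mxE [in RHS]mxE; lra.
apply/eqP; rewrite -subr_eq0; apply/eqP.
by rewrite -[F x - y](mulmxKV uM) -/B h0 mul0mx.
Qed.

End Lib3.

Section Lib4.
Variable R : realType.

Lemma ball_nbhs m (x : 'rV[R]_m) (P : set 'rV[R]_m) :
  (exists2 d, 0 < d & forall y, `|y - x| < d -> P y) -> nbhs x P.
Proof.
move=> [d d0 H]; apply/nbhs_ballP; exists d => // y.
by rewrite -ball_normE /= distrC => /H.
Qed.

Lemma nbhs_ball m (x : 'rV[R]_m) (P : set 'rV[R]_m) :
  nbhs x P -> exists2 d, 0 < d & forall y, `|y - x| < d -> P y.
Proof.
move=> /nbhs_ballP [d d0 H]; exists d => // y hy; apply: H.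
by rewrite -ball_normE /= distrC.
Qed.

Lemma mulmx_continuous m k (M : 'M[R]_(m,k)) : continuous (fun v : 'rV[R]_m => v *m M).
Proof.
move=> v; apply/(@cvgrPdist_le R _ _ (nbhs v) (nbhs_filter v)) => e e0.
have K0 : 0 < mK M + 1 by rewrite ltr_wpDl // mK_ge0.
apply: ball_nbhs; exists (e / (mK M + 1)); first by rewrite divr_gt0.
move=> w hw; rewrite -mulmxBl; apply: (le_trans (mulmx_bound _ _)).
rewrite distrC; apply: (@le_trans _ _ ((mK M + 1) * `|w - v|)).
  by rewrite ler_wpM2r // lerDl.
by rewrite mulrC -ler_pdivlMr // ltW.
Qed.

Lemma SDV_jacobian m k (F : 'rV[R]_m -> 'rV[R]_k) x M : SDV F x M ->
  jacobian F x = M.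
Proof.
move=> HF.
have dF : 'd F x = (mulmxr M) :> (_ -> _).
  apply: diff_unique; first exact: mulmx_continuous.
  apply/eqaddoP => e e0.
  have [d d0 Hd] := HF e e0.
  apply: ball_nbhs; exists d => // h; rewrite subr0 => hh.
  rewrite /= !fctE /=.
  have := Hd (h + x) x; rewrite addrK subrr normr0 => /(_ hh d0).
  by rewrite opprD addrA.
by rewrite /jacobian dF; apply/matrixP => i j; rewrite mxE /= -rowE mxE.
Qed.


Lemma LB m k (F : 'rV[R]_m -> 'rV[R]_k) p M kap : SDV F p M -> 0 < kap ->
  (forall v : 'rV[R]_m, kap * `|v| <= `|v *m M|) ->
  exists2 d, 0 < d & forall y z, `|y - p| < d -> `|z - p| < d ->
    kap / 2 * `|y - z| <= `|F y - F z|.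
Proof.
move=> HF k0 Hk.
have [d d0 Hd] := HF (kap / 2) (divr_gt0 k0 (ltr0Sn _ 1)).
exists d => // y z hy hz.
have h1 := Hd y z hy hz.
have h2 := Hk (y - z).
have h3 : `|(y - z) *m M| <= `|F y - F z| + `|F y - F z - (y - z) *m M|.
  have := ler_normB (F y - F z) (F y - F z - (y - z) *m M).
  by rewrite (_ : F y - F z - (F y - F z - (y - z) *m M) = (y - z) *m M) // opprB addrC subrK.
have nv : 0 <= `|y - z| by [].
nra.
Qed.

Lemma GC m k (F : 'rV[R]_m -> 'rV[R]_k) p M0 M1 u e d : 0 < e -> 0 < d ->
  (forall y z, `|y - p| < d -> `|z - p| < d ->
     `|F y - F z - (y - z) *m M0| <= e * `|y - z|) ->
  `|u - p| < d -> SDV F u M1 ->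
  forall w : 'rV[R]_m, `|w *m M1 - w *m M0| <= 2 * e * `|w|.
Proof.
move=> e0 d0 Hd up H1 w.
have [d1 d10 Hd1] := H1 e e0.
set rho := Num.min d1 (d - `|u - p|).
have rho0 : 0 < rho by rewrite lt_min d10 subr_gt0.
have w1 : 0 < `|w| + 1 by rewrite ltr_wpDl.
set tau := rho / (2 * (`|w| + 1)).
have tau0 : 0 < tau by rewrite divr_gt0 // mulr_gt0.
have tw : tau * `|w| < rho.
  have : tau * (`|w| + 1) = rho / 2 by rewrite /tau; field; rewrite gt_eqF.
  have : rho / 2 < rho by rewrite ltr_pdivrMr // ltr_pMr // ltr1n.
  nra.
set y := u + tau *: w.
have yu : y - u = tau *: w by rewrite /y [u + _]addrC addrK.
have nyu : `|y - u| = tau * `|w| by rewrite yu normrZ gtr0_norm.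
have y1 : `|y - u| < d1.
  by rewrite nyu; apply: (lt_le_trans tw); exact: ge_min_l.
have yp : `|y - p| < d.
  have -> : y - p = (y - u) + (u - p) by rewrite subrKA.
  apply: (le_lt_trans (ler_normD _ _)); rewrite nyu.
  have := lt_le_trans tw (ge_min_r _ _); lra.
have uu : `|u - u| < d1 by rewrite subrr normr0.
have h1 := Hd1 y u y1 uu.
have h0 := Hd y u yp up.
rewrite nyu yu -!scalemxAl in h0 h1.
have H : `|tau *: (w *m M1 - w *m M0)| <= tau * (2 * e * `|w|).
  rewrite scalerBr.
  have -> : tau *: (w *m M1) - tau *: (w *m M0) =
    (F y - F u - tau *: (w *m M0)) - (F y - F u - tau *: (w *m M1)).
    move: (F y - F u) (tau *: (w *m M1)) (tau *: (w *m M0)) => a b c.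
    by apply/rowP => i; rewrite !mxE; ring.
  apply: (le_trans (ler_normB _ _)); nra.
by rewrite normrZ gtr0_norm // ler_pM2l // in H.
Qed.

Lemma open_ball m (O : set 'rV[R]_m) u : open O -> O u ->
  exists2 d, 0 < d & forall y, `|y - u| < d -> O y.
Proof.
move=> oO Ou; apply: nbhs_ball.
by rewrite nbhsE /=; exists O.
Qed.

End Lib4.

Section Lib5.
Variable R : realType.

Lemma ZD (phi : R -> R) a b :
  (forall x, a < x < b -> forall e, 0 < e -> exists2 d, 0 < d &
     forall y, a < y < b -> `|y - x| < d -> `|phi y - phi x| <= e * `|y - x|) ->
  forall x y, a < x < b -> a < y < b -> phi x = phi y.
Proof.
move=> H.
have key : forall x y, a < x < b -> a < y < b -> x < y -> phi x = phi y.
  move=> x y hx hy xy.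
  have cont : forall z, a < z < b -> phi @ z --> phi z.
    move=> z hz; apply/(@cvgrPdist_le R _ _ (nbhs z) (nbhs_filter z)) => e e0.
    have [d d0 Hd] := H z hz 1 ltr01.
    apply/nbhs_ballP; exists (Num.min (Num.min d e) (Num.min (z - a) (b - z))).
      by rewrite /= !lt_min d0 e0 !subr_gt0; case/andP: hz => -> ->.
    move=> t; rewrite -ball_normE /= !lt_min => /andP [/andP [t1 t2] /andP [t3 t4]].
    have ht : a < t < b.
      move: t3 t4; rewrite !ltr_norml => /andP [? ?] /andP [? ?].
      by apply/andP; split; lra.
    rewrite distrC in t1 t2.
    have := Hd t ht t1; rewrite mul1r distrC => h; lra.
  suff [c _ hc] : exists2 c, c \in `]x, y[ & phi y - phi x = 0 * (y - x).
    by move: hc; rewrite mul0r => /eqP; rewrite subr_eq0 eq_sym => /eqP.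
  apply: (@MVT R phi (fun _ => 0) x y xy).
  move=> c; rewrite in_itv /= => /andP [c1 c2].
  have hcab : a < c < b.
    by case/andP: hx => h1 _; case/andP: hy => _ h2; apply/andP; split; lra.
  have Hq : (fun h => h^-1 *: ((phi \o shift c) (h *: 1) - phi c)) @ 0^' --> (0 : R).
    apply/(@cvgrPdist_le R _ _ (0^') _) => e e0.
    have [d d0 Hd] := H c hcab e e0.
    rewrite near_withinE; apply/nbhs_ballP.
    exists (Num.min d (Num.min (c - a) (b - c))).
      by rewrite /= !lt_min d0 !subr_gt0; case/andP: hcab => -> ->.
    move=> h; rewrite -ball_normE /= sub0r normrN !lt_min => /andP [h1 /andP [h2 h3]] hn0.
    have hy' : a < h + c < b.
      move: h2 h3; rewrite !ltr_norml => /andP [? ?] /andP [? ?].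
      by apply/andP; split; lra.
    have := Hd (h + c) hy'; rewrite addrK => /(_ h1) hh.
    have hA : h%:A = h :> R by rewrite [LHS]mulr1.
    rewrite sub0r normrN hA normrZ normfV.
    rewrite ler_pdivrMl ?normr_gt0 //.
    by rewrite mulrC.
  apply: DeriveDef; first by apply/cvg_ex; exists 0.
  exact: cvg_lim Hq.
  apply: continuous_in_subspaceT => z; rewrite inE /= in_itv /= => /andP [z1 z2].
  apply: cont.
  by case/andP: hx => h1 _; case/andP: hy => _ h2; apply/andP; split; lra.
move=> x y hx hy.
case: (ltgtP x y) => [xy|yx|->] //; first exact: key.
by apply/esym; apply: key.
Qed.

End Lib5.

Section Lib6.
Variable R : realType.

Lemma flat_step m (Sb : 'rV[R]_m -> 'rV[R]_m) (k : 'rV[R]_m -> R) u (Mu : 'M[R]_m)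
  gk (v : 'rV[R]_m) beta kap (st : 'rV[R]_m) lam :
  0 < kap -> (forall w : 'rV[R]_m, kap / 2 * `|w| <= `|w *m Mu|) ->
  SDV Sb u Mu -> SD k u gk -> v *m Mu = beta *: Sb u -> beta != 0 ->
  dot v gk = 0 -> Sb u = lam *: st -> lam != 0 ->
  forall eps, 0 < eps -> exists2 d, 0 < d & forall u' lam',
    `|u' - u| < d -> Sb u' = lam' *: st -> `|k u' - k u| <= eps * `|u' - u|.
Proof.
move=> kap0 Hkap HS Hk Hv b0 dv Su l0 eps eps0.
set Kc := 1 + 2 * gK gk / kap.
have Kc0 : 0 < Kc by rewrite ltr_wpDr // divr_ge0 ?mulr_ge0 ?gK_ge0 // ltW.
set e1 := eps / Kc.
have e10 : 0 < e1 by rewrite divr_gt0.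
have [d1 d10 H1] := HS e1 e10.
have [d2 d20 H2] := Hk e1 e10.
exists (Num.min d1 d2); first by rewrite lt_min d10 d20.
move=> u' lam'; rewrite lt_min => /andP [h1 h2] Su'.
have uu1 : `|u - u| < d1 by rewrite subrr normr0.
have uu2 : `|u - u| < d2 by rewrite subrr normr0.
set w := u' - u.
set al := (lam' - lam) / (beta * lam).
have E : (w - al *: v) *m Mu = - (Sb u' - Sb u - w *m Mu).
  rewrite mulmxBl -scalemxAl Hv scalerA Su' Su.
  have -> : al * beta = (lam' - lam) / lam by rewrite /al; field; rewrite b0 l0.
  rewrite scalerA.
  have -> : (lam' - lam) / lam * lam = lam' - lam by field; rewrite l0.
  rewrite scalerBl.
  move: (w *m Mu) (lam' *: st) (lam *: st) => a b c.
  by apply/rowP => i; rewrite !mxE; ring.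
have hS := H1 u' u h1 uu1.
have hK := H2 u' u h2 uu2.
have hw : kap / 2 * `|w - al *: v| <= e1 * `|w|.
  by apply: (le_trans (Hkap _)); rewrite E normrN.
have hd : `|dot w gk| <= gK gk * `|w - al *: v|.
  have -> : dot w gk = dot (w - al *: v) gk by rewrite [RHS]dotB dotZ dv mulr0 subr0.
  exact: dot_bound.
have -> : k u' - k u = (k u' - k u - dot w gk) + dot w gk by ring.
apply: (le_trans (ler_normD _ _)).
have hw' : `|w - al *: v| <= 2 * e1 / kap * `|w|.
  rewrite -(ler_pM2l (divr_gt0 kap0 (ltr0Sn _ 1))).
  have -> : kap / 2 * (2 * e1 / kap * `|w|) = e1 * `|w|.
    by field; rewrite gt_eqF.
  exact: hw.
have g0 := gK_ge0 gk.
have nw : 0 <= `|w| by [].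
have : gK gk * `|w - al *: v| <= gK gk * (2 * e1 / kap * `|w|) by rewrite ler_wpM2l.
have -> : eps = e1 * Kc by rewrite /e1 divfK // gt_eqF.
rewrite /Kc.
have -> : gK gk * (2 * e1 / kap * `|w|) = e1 * (2 * gK gk / kap) * `|w|.
  by field; rewrite gt_eqF.
move=> h3.
have : `|k u' - k u - dot w gk| <= e1 * `|w| by [].
move=> h4; lra.
Qed.

End Lib6.

Unset Implicit Arguments. Set Strict Implicit. Set Printing Implicit Defensive.

Theorem theorem6 (R : realType) (m : nat) (hm : (1 <= m)%N)
  (P Q : 'I_m.+1 -> mpoly.mpoly m R) (D : set 'rV[R]_m)
  (hD : defined_on Q D) (O : set 'rV[R]_m)
  (hOopen : open O) (hOD : O `<=` D)
  (hO1 : forall u, O u -> sigma P Q u ord0 ord0 != 0)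
  (t : 'rV[R]_m) (ht : O t)
  (hdet : \det (jacobian (sigma_bar P Q) t) != 0)
  (hnoU : ~ (exists U : set R, nbhs (1 : R) U /\
             (forall lam, U lam ->
                rp_hypersurface P Q D (lam *: sigma P Q t)))) :
  inner_point_condition P Q O.
Proof.
destruct m as [|n]; first by [].
case: (pselect (inner_point_condition P Q O)) => // Hn.
exfalso; apply: hnoU.
have Gex : forall i : 'I_n.+2, exists Gi : 'rV[R]_n.+1 -> 'rV[R]_n.+1,
    forall u, D u -> SD (fun y => sigma P Q y 0 i) u (Gi u).
  move=> i.
  suff : forall u, exists g, D u -> SD (fun y => sigma P Q y 0 i) u g.
    by case/boolp.choice => f Hf; exists f.
  move=> u; case: (pselect (D u)) => Du; last by exists 0.
  have [gP HP] := SDex_meval (P i) u; have [gQ HQ] := SDex_meval (Q i) u.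
  eexists => _; apply: (SD_ext _ (SD_div HP HQ (hD u Du i))) => y.
  by rewrite /sigma mxE /rat_eval.
have [G HG] := boolp.choice Gex.
pose s0 := fun u => sigma P Q u 0 ord0.
pose Gh := fun (i : 'I_n.+1) u => (s0 u)^-1 *: G (lift ord0 i) u
   - (sigma P Q u 0 (lift ord0 i) / s0 u ^+ 2) *: G ord0 u.
have HGh : forall u, O u -> forall i, SD (fun y => sigma_hat P Q y 0 i) u (Gh i u).
  move=> u Ou i.
  apply: (SD_ext _ (SD_div (HG (lift ord0 i) u (hOD _ Ou)) (HG ord0 u (hOD _ Ou)) (hO1 u Ou))).
  by move=> y; rewrite /sigma_hat [RHS]mxE.
pose Jh := fun u => Mof (fun i => Gh i u).
have HJh : forall u, O u -> SDV (sigma_hat P Q) u (Jh u).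
  by move=> u Ou; apply: SDV_Mof; exact: HGh.
pose Mb := fun u => Mof (fun i : 'I_n.+1 => G (widen_ord (leqnSn n.+1) i) u).
have HMb : forall u, D u -> SDV (sigma_bar P Q) u (Mb u).
  move=> u Du; apply: SDV_Mof => i.
  by apply: (SD_ext _ (HG _ u Du)) => y; rewrite /sigma_bar mxE.
have StepA : forall u, O u -> \det (Jh u) = 0.
  move=> u Ou; case: (eqVneq (\det (Jh u)) 0) => // dn; exfalso; apply: Hn.
  exists u; split => //.
  have [r r0 Hr] := open_ball hOopen Ou.
  have r20 : 0 < r / 2 by rewrite divr_gt0.
  have [rho rho0 Hrho] := LS (HJh u Ou) dn r20.
  apply: ball_nbhs; exists rho => // y hy.
  have [x hx Fx] := Hrho y hy.
  exists x => //; apply: Hr; apply: (le_lt_trans hx).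
  by rewrite ltr_pdivrMr // ltr_pMr // ltr1n.
have Dt := hOD _ ht.
have HS0 := HMb t Dt.
set M0 := Mb t.
have hdet0 : \det M0 != 0 by move: hdet; rewrite (SDV_jacobian HS0).
have [kap kap0 Hkap] := inv_lb hdet0.
have e0 : 0 < kap / 4 by rewrite divr_gt0.
have [d0 d00 Hd0] := HS0 _ e0.
have [dl dl0 Hdl] := LB HS0 kap0 Hkap.
have [rO rO0 HrO] := open_ball hOopen ht.
set r0 := Num.min (rO / 2) (Num.min (d0 / 2) (dl / 2)).
have r00 : 0 < r0 by rewrite !lt_min !divr_gt0.
have half : forall x : R, 0 < x -> x / 2 < x.
  by move=> x x0; rewrite ltr_pdivrMr // ltr_pMr // ltr1n.
have Hr0 : forall u, `|u - t| <= r0 -> [/\ O u, `|u - t| < d0 & `|u - t| < dl].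
  move=> u hu; split.
  - apply: HrO; apply: (le_lt_trans hu); apply: (le_lt_trans (ge_min_l _ _)); exact: half.
  - apply: (le_lt_trans hu); apply: (le_lt_trans (ge_min_r _ _)).
    apply: (le_lt_trans (ge_min_l _ _)); exact: half.
  - apply: (le_lt_trans hu); apply: (le_lt_trans (ge_min_r _ _)).
    apply: (le_lt_trans (ge_min_r _ _)); exact: half.
have HMu : forall u, `|u - t| <= r0 ->
    forall w : 'rV[R]_n.+1, kap / 2 * `|w| <= `|w *m Mb u|.
  move=> u hu w; have [Ou ud ul] := Hr0 u hu.
  have h2 := GC e0 d00 Hd0 ud (HMb u (hOD _ Ou)) w.
  have h1 := Hkap w.
  have h3 : `|w *m M0| <= `|w *m Mb u| + `|w *m Mb u - w *m M0|.
    have := ler_normB (w *m Mb u) (w *m Mb u - w *m M0).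
    by rewrite opprB addrC subrK.
  have nw : 0 <= `|w| by [].
  nra.
have [rho rho0 Hrho] := LS HS0 hdet0 r00.
set st := sigma_bar P Q t.
set eta := Num.min (2^-1) (rho / (`|st| + 1)).
have st0 : 0 < `|st| + 1 by rewrite ltr_wpDl.
have eta0 : 0 < eta by rewrite lt_min invr_gt0 ltr0n divr_gt0.
have Hlam : forall lam : R, `|lam - 1| < eta ->
    exists x, `|x - t| <= r0 /\ sigma_bar P Q x = lam *: st.
  move=> lam hl.
  have hy : `|lam *: st - sigma_bar P Q t| < rho.
    rewrite -/st -{2}(scale1r st) -scalerBl normrZ.
    have h1 : `|lam - 1| < rho / (`|st| + 1) by apply: (lt_le_trans hl); exact: ge_min_r.
    rewrite ltr_pdivlMr // in h1.
    have : 0 <= `|lam - 1| by [].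
    nra.
  have [x hx Fx] := Hrho _ hy.
  by exists x.
have : forall lam : R, exists x, `|lam - 1| < eta ->
    `|x - t| <= r0 /\ sigma_bar P Q x = lam *: st.
  move=> lam; case: (pselect (`|lam - 1| < eta)) => hl; last by exists t.
  by have [x hx] := Hlam lam hl; exists x.
case/boolp.choice => gam Hgam.
have Hint : forall lam : R, 1 - eta < lam < 1 + eta -> `|lam - 1| < eta.
  by move=> lam /andP [h1 h2]; rewrite ltr_norml; apply/andP; split; lra.
have lam_pos : forall lam : R, `|lam - 1| < eta -> 0 < lam.
  move=> lam; rewrite ltr_norml => /andP [h1 h2].
  have : eta <= 2^-1 by exact: ge_min_l.
  lra.
pose k := fun u => sigma_hat P Q u 0 ord_max.
pose phi := fun lam => k (gam lam).
have Hphi : forall lam lam', 1 - eta < lam < 1 + eta -> 1 - eta < lam' < 1 + eta ->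
    phi lam = phi lam'.
  apply: ZD => lam hlam eps eps0.
  have hl := Hint _ hlam.
  have [hu Su] := Hgam lam hl.
  have [Ou ud ul] := Hr0 _ hu.
  have Du := hOD _ Ou.
  have /det0P [v v0 hv] : \det (Jh (gam lam)) == 0 by rewrite StepA.
  have dvh : forall i, dot v (Gh i (gam lam)) = 0.
    move=> i.
    have E : (v *m Jh (gam lam)) 0 i = dot v (Gh i (gam lam)) := mulMof _ _ _.
    by rewrite -E hv mxE.
  have s00 : s0 (gam lam) != 0 := hO1 _ Ou.
  set u := gam lam in hu Su Ou ud ul Du hv dvh s00 *.
  set beta := dot v (G ord0 u) / s0 u.
  have hvG : forall j, dot v (G j u) = beta * sigma P Q u 0 j.
    move=> j; case: (unliftP ord0 j) => [i ->|->]; last first.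
      by rewrite /beta divfK.
    have := dvh i; rewrite /Gh dotDr dotNr !dotZr.
    set a := dot v (G (lift ord0 i) u); set c := dot v (G ord0 u) => h.
    have h' : (s0 u)^-1 * a = sigma P Q u 0 (lift ord0 i) / s0 u ^+ 2 * c by lra.
    have -> : a = s0 u * ((s0 u)^-1 * a) by rewrite mulrA mulfV // mul1r.
    rewrite h' /beta -/c; field.
    by rewrite s00.
  have hvM : v *m Mb u = beta *: sigma_bar P Q u.
    by apply/rowP => i; rewrite mulMof hvG [RHS]mxE [in RHS]mxE.
  have b0 : beta != 0.
    apply/negP => /eqP b0; move: (HMu u hu v); rewrite hvM b0 scale0r normr0.
    have : 0 < `|v| by rewrite normr_gt0.
    move=> h1 h2; have : 0 < kap / 2 * `|v| by rewrite mulr_gt0 // divr_gt0.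
    lra.
  have dk : dot v (Gh ord_max u) = 0 := dvh ord_max.
  have Hk : SD k u (Gh ord_max u) := HGh u Ou ord_max.
  have l0 : lam != 0 by rewrite gt_eqF // lam_pos.
  have Hfl := flat_step kap0 (HMu u hu) (HMb u Du) Hk hvM b0 dk Su l0.
  set C := 2 / kap * (`|st| + 1).
  have C0 : 0 < C by rewrite mulr_gt0 // divr_gt0.
  have [d d0' Hd] := Hfl (eps / C) (divr_gt0 eps0 C0).
  exists (d / C); first by rewrite divr_gt0.
  move=> lam' hlam' hd.
  have hl' := Hint _ hlam'.
  have [hu' Su'] := Hgam lam' hl'.
  have [Ou' ud' ul'] := Hr0 _ hu'.
  have hLip : `|gam lam' - u| <= C * `|lam' - lam|.
    have := Hdl (gam lam') u ul' ul.
    rewrite Su' Su -scalerBl normrZ => h.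
    have nst : 0 <= `|st| by [].
    have nl : 0 <= `|lam' - lam| by [].
    rewrite /C.
    have -> : 2 / kap * (`|st| + 1) * `|lam' - lam| =
      (kap / 2)^-1 * ((`|st| + 1) * `|lam' - lam|) by field; rewrite gt_eqF.
    rewrite ler_pdivlMl ?divr_gt0 //.
    apply: (le_trans h); nra.
  have hdu : `|gam lam' - u| < d.
    apply: (le_lt_trans hLip).
    by rewrite mulrC -ltr_pdivlMr.
  have := Hd (gam lam') lam' hdu Su'.
  rewrite /phi -/u => h.
  apply: (le_trans h).
  have -> : eps * `|lam' - lam| = eps / C * (C * `|lam' - lam|).
    by field; rewrite gt_eqF.
  by rewrite ler_wpM2l // divr_ge0 // ltW.
have g1 : gam 1 = t.
  have h1 : `|1 - 1 : R| < eta by rewrite subrr normr0.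
  have [hu Su] := Hgam 1 h1.
  have [_ _ ul] := Hr0 _ hu.
  have tt : `|t - t| < dl by rewrite subrr normr0.
  have := Hdl (gam 1) t ul tt; rewrite Su scale1r subrr normr0 => h.
  have : `|gam 1 - t| <= 0.
    have nn : 0 <= `|gam 1 - t| by [].
    nra.
  rewrite normr_le0 subr_eq0 => /eqP //.
exists [set lam : R | `|lam - 1| < eta]; split.
  apply/nbhs_ballP; exists eta => // lam; rewrite -ball_normE /= distrC //.
move=> lam hl.
have [hu Su] := Hgam lam hl.
have [Ou _ _] := Hr0 _ hu.
exists (gam lam); first exact: hOD.
have hphi : phi lam = phi 1.
  apply: Hphi.
    by move: hl; rewrite /= ltr_norml => /andP [h1 h2]; apply/andP; split; lra.
  by apply/andP; split; lra.
rewrite /phi /k g1 in hphi.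
have s0u : sigma P Q (gam lam) 0 ord0 = lam * sigma P Q t 0 ord0.
  have := congr1 (fun w : 'rV[R]_n.+1 => w 0 ord0) Su.
  rewrite /st /sigma_bar !mxE.
  by rewrite (_ : widen_ord (leqnSn n.+1) ord0 = ord0) //; apply: val_inj.
apply/rowP => j; rewrite [RHS]mxE.
case: (unliftP ord_max j) => [i ->|->].
  have := congr1 (fun w : 'rV[R]_n.+1 => w 0 i) Su.
  rewrite /st /sigma_bar !mxE.
  by rewrite (_ : lift ord_max i = widen_ord (leqnSn n.+1) i) //; apply: val_inj; rewrite /= /bump leqNgt ltn_ord.
have e1 : lift ord0 (ord_max : 'I_n.+1) = ord_max by apply: val_inj.
move: hphi; rewrite /sigma_hat !mxE e1 => hphi.
have a0 : rat_eval (P ord0) (Q ord0) (gam lam) != 0.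
  by have := hO1 _ Ou; rewrite /sigma mxE.
have b0 : rat_eval (P ord0) (Q ord0) t != 0.
  by have := hO1 _ ht; rewrite /sigma mxE.
rewrite /sigma !mxE in s0u.
rewrite -(divfK a0 (rat_eval (P ord_max) (Q ord_max) (gam lam))) hphi s0u.
by field; rewrite b0.
Qed.
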